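(* For every $n \geq 1$, the map $\psi$ is a bijection from $\mathcal{S}^{(1)}_n$, the set of skeletons of planar linear normal $\lambda$-terms with $n$ atoms, onto $\mathcal{V}_{n-1}$, the set of v-trees with $n-1$ edges.
   Context: $\lambda$-terms, linear (closed, each abstraction binds exactly one atom), normal (no sub-term $(\lambda x.u)\,v$) and planar terms are standard; the skeleton of a term is the plane unary-binary tree (atom $\mapsto$ leaf, application $u\,v \mapsto$ binary node with left subtree from $u$ and right subtree from $v$, abstraction $\mapsto$ unary node), and planarity means the edges from each leaf's parent to its binding unary node, drawn counter-clockwise and entering from the right, do not cross; the number of atoms is the number of leaves. For a unary-binary tree $S$ and node $u$, $S_u$ is the subtree at $u$, and $\operatorname{leaf}, \operatorname{unary}$ count leaves and unary nodes. The map $\psi$: for $S \in \mathcal{S}^{(1)}_n$, let $T$ be the plane tree whose nodes are a new root $r$ and the binary nodes of $S$. For a node $u$ of $T$, let $R(u)$ be the right subtree of $u$ in $S$ if $u$ is a binary node, and $R(r)=S$. The children of $u$ in $T$, from left to right, are $x_1, \ldots, x_m$ where $x_1$ is the first binary node of $R(u)$ reached from its root through a (possibly empty) chain of unary nodes, and $x_{i+1}$ is the left child of $x_i$ in $S$ as long as it is a binary node (no children if $R(u)$ has no binary node). Label each binary node $u$ by $\ell(u) = \operatorname{leaf}(S_v) - \operatorname{unary}(S_v)$, $v$ the right child of $u$ in $S$, and label $r$ by $\ell(r) = \operatorname{leaf}(S_w) - \operatorname{unary}(S_w)$, where $w$ is the first node of $S$ (from the root) that is not unary. Set $\psi(S)=(T,\ell)$.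 A v-tree is a plane tree $T$ with integer node labels $\ell$ such that: (i) leaves have label $0$ or $1$; (ii) every non-root node $u$ with children $v_1,\ldots,v_k$ satisfies $0 \leq \ell(u) \leq 1 + \sum_{i=1}^k \ell(v_i)$; (iii) the root $r$ with children $v_1,\ldots,v_k$ satisfies $\ell(r) = 1 + \sum_{i=1}^k \ell(v_i)$. Its size is its number of edges. *)

(* Defs.v *)
From mathcomp Require Import all_boot all_order all_algebra.
Set Implicit Arguments. Unset Strict Implicit. Unset Printing Implicit Defensive.
Import Order.TTheory GRing.Theory Num.Theory.

Inductive term : Type :=
| Var of nat            (* de Bruijn index: 0 = nearest enclosing abstraction *)
| App of term & term
| Lam of term.

Fixpoint closed_at (k : nat) (t : term) : bool :=
  match t with
  | Var i => i < k
  | App u v => closed_at k u && closed_at k v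
  | Lam u => closed_at k.+1 u
  end.
Definition closed (t : term) : bool := closed_at 0 t.

Fixpoint occ (d : nat) (t : term) : nat :=
  match t with
  | Var i => (i == d)
  | App u v => occ d u + occ d v
  | Lam u => occ d.+1 u
  end.

Fixpoint lin_abs (t : term) : bool :=
  match t with
  | Var _ => true
  | App u v => lin_abs u && lin_abs v
  | Lam u => (occ 0 u == 1) && lin_abs u
  end.

Definition linear (t : term) : bool := closed t && lin_abs t.

Fixpoint normal (t : term) : bool :=
  match t with
  | Var _ => true
  | App (Lam _) _ => false
  | App u v => normal u && normal v
  | Lam u => normal u
  end.

(* Planarity: ordered (exchange-free) typing.  The context lists the free
   variables (as de Bruijn indices) in binding order; an application splits
   the context in order, an abstraction adds its variable at the end. *)
Inductive planar_ctx : seq nat -> term -> Prop :=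
| PVar i : planar_ctx [:: i] (Var i)
| PApp G D u v : planar_ctx G u -> planar_ctx D v -> planar_ctx (G ++ D) (App u v)
| PLam G u : planar_ctx (map S G ++ [:: 0]) u -> planar_ctx G (Lam u).

Definition planar (t : term) : Prop := planar_ctx [::] t.

Fixpoint atoms (t : term) : nat :=
  match t with
  | Var _ => 1
  | App u v => atoms u + atoms v
  | Lam u => atoms u
  end.

Inductive ubtree : Type :=
| Leaf
| Unary of ubtree
| Binary of ubtree & ubtree.

Fixpoint skeleton (t : term) : ubtree :=
  match t with
  | Var _ => Leaf
  | App u v => Binary (skeleton u) (skeleton v)
  | Lam u => Unary (skeleton u)
  end.

Fixpoint nleaf (s : ubtree) : nat :=
  match s with Leaf => 1 | Unary s' => nleaf s' | Binary l r => nleaf l + nleaf r end.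
Fixpoint nunary (s : ubtree) : nat :=
  match s with Leaf => 0 | Unary s' => (nunary s').+1 | Binary l r => nunary l + nunary r end.

Definition S1 (n : nat) (s : ubtree) : Prop :=
  exists t : term, [/\ linear t, normal t, planar t, atoms t = n & skeleton t = s].

Inductive vtree : Type := VNode of int & seq vtree.

Definition vlabel (t : vtree) : int := let: VNode l _ := t in l.
Definition vchildren (t : vtree) : seq vtree := let: VNode _ c := t in c.

Definition sum_labels (c : seq vtree) : int := (\sum_(x <- c) vlabel x)%R.

Fixpoint nonroot_ok (t : vtree) : bool :=
  let: VNode l c := t in
  [&& nilp c ==> ((l == 0%R) || (l == 1%R)),
      (0 <= l)%R, (l <= 1 + sum_labels c)%R & all nonroot_ok c].

Definition is_vtree (t : vtree) : bool :=
  let: VNode l c := t in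
  [&& nilp c ==> ((l == 0%R) || (l == 1%R)),
      l == (1 + sum_labels c)%R & all nonroot_ok c].

Fixpoint nnodes (t : vtree) : nat :=
  let: VNode _ c := t in (sumn (map nnodes c)).+1.

Definition vsize (t : vtree) : nat := (nnodes t).-1.

Definition V (m : nat) (t : vtree) : Prop := is_vtree t /\ vsize t = m.

Definition lab (s : ubtree) : int := (nleaf s)%:Z - (nunary s)%:Z.

Fixpoint strip (s : ubtree) : ubtree :=
  match s with Unary s' => strip s' | _ => s end.

(* kids s : the T-children of a node u with R(u) = s, i.e. the psi-images of
   x_1, x_2, ... where x_1 = first binary node of s after unary nodes and
   x_{i+1} = left child of x_i while binary. *)
Fixpoint kids (s : ubtree) : seq vtree :=
  match s with
  | Leaf => [::]
  | Unary s' => kids s'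
  | Binary l r => VNode (lab r) (kids r) :: lspine l
  end
with lspine (s : ubtree) : seq vtree :=
  match s with
  | Binary l r => VNode (lab r) (kids r) :: lspine l
  | _ => [::]
  end.

Definition psi (s : ubtree) : vtree := VNode (lab (strip s)) (kids s).

(* Main.v *)
Require Import Defs.
From mathcomp Require Import all_boot all_order all_algebra zify.
Set Implicit Arguments. Unset Strict Implicit. Unset Printing Implicit Defensive.
Import Order.TTheory GRing.Theory Num.Theory.

Definition isU (s : ubtree) : bool := if s is Unary _ then true else false.

Fixpoint wf (s : ubtree) : bool :=
  match s with
  | Leaf => true
  | Unary u => wf u && (nunary u < nleaf u)
  | Binary l r => [&& wf l, wf r & ~~ isU l]
  end.

Fixpoint pre (s : ubtree) : nat := if s is Unary u then (pre u).+1 else 0.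
Fixpoint nbin (s : ubtree) : nat :=
  match s with Leaf => 0 | Unary u => nbin u | Binary l r => (nbin l + nbin r).+1 end.
Definition node (r : ubtree) := VNode (lab r) (kids r).
Fixpoint spine (rs : seq ubtree) : ubtree :=
  if rs is r :: rs' then Binary (spine rs') r else Leaf.
Fixpoint unv (t : vtree) : ubtree :=
  let: VNode l c := t in iter (absz (1 + sum_labels c - l)%R) Unary (spine (map unv c)).
Definition rootinv (t : vtree) : ubtree :=
  let: VNode l c := t in iter `|l|%N Unary (spine (map unv c)).

Fixpoint build (s : ubtree) (G : seq nat) : term :=
  match s with
  | Leaf => Var (head 0 G)
  | Unary u => Lam (build u (map S G ++ [:: 0]))
  | Binary l r => App (build l (take (nleaf l - nunary l) G))
                      (build r (drop (nleaf l - nunary l) G))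
  end.

Lemma wf_le s : wf s -> nunary s <= nleaf s.
Proof.
elim: s => [|u IH|l IHl r IHr] //=.
  by case/andP=> _ h; lia.
by case/and3P=> /IHl h1 /IHr h2 _; lia.
Qed.

Lemma nleaf_nbin s : nleaf s = (nbin s).+1.
Proof. elim: s => [|u IH|l IHl r IHr] //=; lia. Qed.

Lemma atoms_sk t : atoms t = nleaf (skeleton t).
Proof. elim: t => [i|u IHu v IHv|u IH] //=; lia. Qed.

Lemma normal_App u v : normal (App u v) =
  [&& normal u, normal v & (if u is Lam _ then false else true)].
Proof. by case: u => //= *; rewrite ?andbT ?andbF. Qed.

Lemma planar_wf G t : planar_ctx G t -> normal t ->
  wf (skeleton t) && (nunary (skeleton t) + size G == nleaf (skeleton t)).
Proof.
elim=> {G t} [i|G D u v _ IHu _ IHv|G u _ IH] //.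
  rewrite normal_App => /and3P [nu nv hu] /=.
  case/andP: (IHu nu) => w1 /eqP e1; case/andP: (IHv nv) => w2 /eqP e2.
  rewrite w1 w2 /=; apply/andP; split; first by case: u hu {IHu w1 e1 nu}.
  rewrite size_cat; apply/eqP; lia.
move=> nu; case/andP: (IH nu) => w /eqP e.
rewrite size_cat size_map /= in e.
rewrite /= w /=; apply/andP; split; [|apply/eqP]; lia.
Qed.

Lemma S1_wf n s : S1 n s -> [&& wf s, nunary s == nleaf s & nleaf s == n].
Proof.
case=> t [_ nt pt ht st]; subst s.
case/andP: (planar_wf pt nt) => -> /= /eqP e.
have := atoms_sk t; move: e; rewrite /= addn0 => /eqP e h; apply/andP; split; apply/eqP; lia.
Qed.

Lemma build_notLam s G : ~~ isU s -> (if build s G is Lam _ then false else true).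
Proof. by case: s. Qed.

Lemma build_ok s G : wf s -> nunary s + size G = nleaf s ->
  [/\ planar_ctx G (build s G), normal (build s G) & skeleton (build s G) = s].
Proof.
elim: s G => [|u IH|l IHl r IHr] G /=.
- move=> _ e; case: G e => [|i [|j G]] //= _; split=> //; exact: PVar.
- case/andP=> wu lt e.
  have [h1 h2 h3] := IH (map S G ++ [:: 0]) wu ltac:(rewrite size_cat size_map /=; lia).
  by split=> //; [exact: PLam | rewrite h3].
- case/and3P=> wl wr nl e.
  have ll := wf_le wl; have lr := wf_le wr.
  set k := nleaf l - nunary l.
  have sk : size (take k G) = k by rewrite size_takel //; rewrite /k; lia.
  have [a1 a2 a3] := IHl (take k G) wl ltac:(rewrite sk /k; lia).
  have [b1 b2 b3] := IHr (drop k G) wr ltac:(rewrite size_drop /k; lia).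
  split; last by rewrite a3 b3.
    by rewrite -[X in planar_ctx X _](cat_take_drop k G); exact: PApp.
  by rewrite -/(normal (App _ _)) normal_App a2 b2 /=; exact: build_notLam.
Qed.

Lemma planar_closed G t : planar_ctx G t -> forall k, all (fun i => i < k) G -> closed_at k t.
Proof.
elim=> {G t} [i|G D u v _ IHu _ IHv|G u _ IH] k /=.
- by rewrite andbT.
- by rewrite all_cat => /andP [/IHu -> /IHv ->].
- move=> H; apply: IH; rewrite all_cat /= andbT all_map.
  by apply: sub_all H => i /=.
Qed.

Lemma planar_occ G t : planar_ctx G t -> forall d, occ d t = count_mem d G.
Proof.
elim=> {G t} [i|G D u v _ IHu _ IHv|G u _ IH] d /=.
- by rewrite addn0.
- by rewrite IHu IHv count_cat.
- rewrite IH count_cat count_map /= addn0.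
  by rewrite addn0; apply: eq_count => x.
Qed.

Lemma planar_lin G t : planar_ctx G t -> lin_abs t.
Proof.
elim=> {G t} [i|G D u v _ IHu _ IHv|G u pu IH] //=.
- by rewrite IHu IHv.
- rewrite IH andbT (planar_occ pu) count_cat count_map /=.
  by rewrite (@eq_count _ _ pred0) ?count_pred0.
Qed.

Lemma S1_of_wf s : wf s -> nunary s = nleaf s -> S1 (nleaf s) s.
Proof.
move=> w e; have [h1 h2 h3] := @build_ok s [::] w ltac:(rewrite /=; lia).
exists (build s [::]); split=> //.
- by rewrite /Defs.linear /Defs.closed (planar_closed h1) ?(planar_lin h1).
- by rewrite atoms_sk h3.
Qed.

Lemma lspine_kids s : ~~ isU s -> lspine s = kids s.
Proof. by case: s. Qed.

Lemma kidsB l r : ~~ isU l -> kids (Binary l r) = node r :: kids l.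
Proof. by move=> h; rewrite /= lspine_kids. Qed.

Lemma strip_notU s : ~~ isU (strip s).
Proof. by elim: s. Qed.

Lemma strip_id s : ~~ isU s -> strip s = s.
Proof. by case: s. Qed.

Lemma iter_pre s : iter (pre s) Unary (strip s) = s.
Proof. by elim: s => [|u IH|l _ r _] //=; rewrite IH. Qed.

Lemma labU u : lab (Unary u) = (lab u - 1)%R.
Proof. rewrite /lab /=; lia. Qed.

Lemma labB l r : lab (Binary l r) = (lab l + lab r)%R.
Proof. rewrite /lab /=; lia. Qed.

Lemma lab_pre s : lab s = (lab (strip s) - (pre s)%:Z)%R.
Proof. elim: s => [|u IH|l _ r _] /=; rewrite ?labU ?IH; lia. Qed.

Lemma lab_ge0 s : wf s -> (0 <= lab s)%R.
Proof. move/wf_le; rewrite /lab; lia. Qed.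

Lemma kids_strip s : kids (strip s) = kids s.
Proof. by elim: s. Qed.

Lemma sum_nil : sum_labels [::] = 0%R.
Proof. by rewrite /sum_labels big_nil. Qed.

Lemma sum_cons x c : sum_labels (x :: c) = (vlabel x + sum_labels c)%R.
Proof. by rewrite /sum_labels big_cons. Qed.

Lemma main_psi s : wf s ->
  all nonroot_ok (kids s) /\ lab (strip s) = (1 + sum_labels (kids s))%R.
Proof.
elim: s => [|u IH|l IHl r IHr] /=.
- by rewrite sum_nil /lab.
- by case/andP=> /IH.
- case/and3P=> wl wr nl.
  rewrite lspine_kids //.
  have [a1 a2] := IHl wl; have [b1 b2] := IHr wr.
  rewrite strip_id // in a2.
  have g0 := lab_ge0 wr.
  have le := lab_pre r.
  split.
    rewrite /= a1 b1 andbT /=.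
    apply/and3P; split.
    + apply/implyP => /nilP e; rewrite e sum_nil in b2.
      have : (lab r = 0 \/ lab r = 1)%R by lia.
      by case=> ->; rewrite eqxx ?orbT.
    + exact: g0.
    + rewrite -b2; lia.
  rewrite sum_cons labB /=; lia.
Qed.

Lemma nbin_kids s : wf s -> sumn (map nnodes (kids s)) = nbin s.
Proof.
elim: s => [|u IH|l IHl r IHr] //=.
- by case/andP=> /IH.
- case/and3P=> wl wr nl; rewrite lspine_kids //= IHl // IHr //; lia.
Qed.

Lemma vsize_psi s : wf s -> vsize (psi s) = nbin s.
Proof. by move=> w; rewrite /vsize /psi /= nbin_kids. Qed.

Lemma psi_V s : wf s -> nunary s = nleaf s -> V (nleaf s).-1 (psi s).
Proof.
move=> w e; have [a1 a2] := main_psi w.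
split; last by rewrite vsize_psi // nleaf_nbin.
rewrite /is_vtree /psi a1 a2 eqxx andbT /=.
by rewrite andbT; apply/implyP => /nilP ->; rewrite sum_nil addr0 eqxx orbT.
Qed.


Lemma unv_node s : wf s -> spine (map unv (kids s)) = strip s -> unv (node s) = s.
Proof.
move=> w h; rewrite /node /= h.
have [_ a2] := main_psi w.
have e : absz (1 + sum_labels (kids s) - lab s)%R = pre s.
  have := lab_pre s; rewrite a2; lia.
by rewrite e iter_pre.
Qed.

Lemma spine_unv s : wf s -> spine (map unv (kids s)) = strip s.
Proof.
elim: s => [|u IH|l IHl r IHr] //=.
- by case/andP=> /IH.
- case/and3P=> wl wr nl; rewrite lspine_kids //= IHl // strip_id //.
  by rewrite -[iter _ _ _]/(unv (node r)) unv_node // IHr.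
Qed.

Lemma rootinv_psi s : wf s -> nunary s = nleaf s -> rootinv (psi s) = s.
Proof.
move=> w e; rewrite /psi /= spine_unv //.
have : lab s = 0%R by rewrite /lab e; lia.
rewrite lab_pre => h.
have -> : `|lab (strip s)|%N = pre s by lia.
exact: iter_pre.
Qed.

Fixpoint allP' (P : vtree -> Prop) (c : seq vtree) : Prop :=
  if c is x :: c' then P x /\ allP' P c' else True.

Fixpoint vtree_ind' (P : vtree -> Prop)
  (H : forall l c, allP' P c -> P (VNode l c)) (t : vtree) {struct t} : P t :=
  match t with
  | VNode l c => H l c ((fix F (c : seq vtree) : allP' P c :=
       match c return allP' P c with
       | [::] => I
       | x :: c' => conj (vtree_ind' H x) (F c')
       end) c)
  end.

Lemma spine_notU rs : ~~ isU (spine rs).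
Proof. by case: rs. Qed.

Lemma iter_spec k x : wf x -> (k%:Z <= lab x)%R ->
  [/\ wf (iter k Unary x), lab (iter k Unary x) = (lab x - k%:Z)%R,
      kids (iter k Unary x) = kids x & strip (iter k Unary x) = strip x].
Proof.
move=> w; elim: k => [|k IH] h.
  by split=> //; rewrite subr0.
have [a1 a2 a3 a4] := IH ltac:(lia).
rewrite iterS; split=> //=.
- rewrite a1 /=; move: a2 h; rewrite /lab; lia.
- rewrite labU a2; lia.
Qed.

Lemma unv_spec t : nonroot_ok t ->
  [/\ wf (unv t), lab (unv t) = vlabel t & kids (unv t) = vchildren t].
Proof.
elim/vtree_ind': t => l c IH /= /and4P [_ l0 l1 ac].
have : [/\ wf (spine (map unv c)), lab (spine (map unv c)) = (1 + sum_labels c)%R,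
           kids (spine (map unv c)) = c & (0 <= sum_labels c)%R].
  elim: c IH ac {l0 l1} => [|x c IHc] /=.
    by move=> _ _; rewrite sum_nil /lab.
  case=> Px Pc /andP [ox oc].
  have [b1 b2 b3 b4] := IHc Pc oc.
  have [c1 c2 c3] := Px ox.
  have x0 : (0 <= vlabel x)%R by case: x ox {Px c1 c2 c3} => l' c' /and4P [].
  rewrite b1 c1 spine_notU lspine_kids ?spine_notU // b3 labB b2 c2 sum_cons.
  split=> //; try lia.
  by rewrite c3; case: x {Px ox c1 c2 c3 x0}.
case=> b1 b2 b3 b4.
have [d1 d2 d3 _] := @iter_spec (absz (1 + sum_labels c - l)%R) _ b1 ltac:(rewrite b2; lia).
split=> //.
- rewrite d2 b2; lia.
- by rewrite d3.
Qed.

Lemma rootinv_spec t : is_vtree t ->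
  [/\ wf (rootinv t), nunary (rootinv t) = nleaf (rootinv t) & psi (rootinv t) = t].
Proof.
case: t => l c /and3P [_ /eqP el ac] /=.
have : [/\ wf (spine (map unv c)), lab (spine (map unv c)) = (1 + sum_labels c)%R,
           kids (spine (map unv c)) = c & (0 <= sum_labels c)%R].
  elim: c ac {el} => [|x c IHc] /=.
    by move=> _; rewrite sum_nil /lab.
  case/andP=> ox oc.
  have [b1 b2 b3 b4] := IHc oc.
  have [c1 c2 c3] := unv_spec ox.
  have x0 : (0 <= vlabel x)%R by case: x ox {c1 c2 c3} => l' c' /and4P [].
  rewrite b1 c1 spine_notU lspine_kids ?spine_notU // b3 labB b2 c2 sum_cons.
  split=> //; try lia.
  by rewrite c3; case: x {ox c1 c2 c3 x0}.
case=> b1 b2 b3 b4.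
have [d1 d2 d3 d4] := @iter_spec `|l|%N _ b1 ltac:(rewrite b2; lia).
split=> //.
- move: d2; rewrite b2 /lab; lia.
- rewrite /psi d3 d4 b3 strip_id ?spine_notU // b2 el //.
Qed.

Theorem proposition10 (n : nat) : 1 <= n ->
  [/\ (forall s, S1 n s -> V n.-1 (psi s)),
      (forall s1 s2, S1 n s1 -> S1 n s2 -> psi s1 = psi s2 -> s1 = s2) &
      (forall t, V n.-1 t -> exists2 s, S1 n s & psi s = t)].
Proof.
move=> n1; split.
- move=> s /S1_wf /and3P [w /eqP e /eqP <-]; exact: psi_V.
- move=> s1 s2 /S1_wf /and3P [w1 /eqP e1 _] /S1_wf /and3P [w2 /eqP e2 _] h.
  by rewrite -(rootinv_psi w1 e1) h rootinv_psi.
- move=> t [vt st]; have [w e p] := rootinv_spec vt.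
  exists (rootinv t) => //.
  have : nleaf (rootinv t) = n.
    by have h := vsize_psi w; rewrite p in h; rewrite nleaf_nbin -h st prednK.
  by move=> <-; exact: S1_of_wf.
Qed.
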